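(* Let $T$ be Takagi's function on $[0,1]$, $T(x)=\sum_{n=1}^\infty 2^{-n}\phi^{(n)}(x)$, with $\phi(x)=2x$ on $[0,1/2]$, $\phi(x)=2-2x$ on $[1/2,1]$. Let $x\in[0,1)$ with binary expansion $x=\sum_{k\ge1}2^{-k}\varepsilon_k$ (for dyadic $x$, the expansion eventually all zeros), and suppose $d_1(x):=\lim_{n\to\infty}\frac1n\sum_{k=1}^n\varepsilon_k$ exists; set $d_0(x)=1-d_1(x)$. Let $b_1<b_2<\cdots$ enumerate the indices $k$ with $\varepsilon_k=0$. (i) If $d_1(x)<1$, then $\displaystyle\lim_{h\downarrow0}\frac{T(x+h)-T(x)}{h\log_2(1/|h|)}=d_0(x)-d_1(x)$. (ii) If $d_1(x)=1$, then $\displaystyle\lim_{h\downarrow0}\frac{T(x+h)-T(x)}{h\log_2(1/|h|)}$ exists if and only if $b_{n+1}/b_n\to1$, in which case the limit equals $-1$.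
   Context: For non-dyadic $x$, $\{b_n\}$ coincides with the sequence determined by $1-x=\sum_{n\ge1}2^{-b_n}$. *)

(* Defs.v *)
From Stdlib Require Import Reals Lra ZArith.
From Coquelicot Require Import Coquelicot.
Open Scope R_scope.

Definition phi (x : R) : R := if Rle_dec x (1/2) then 2 * x else 2 - 2 * x.

Fixpoint phi_iter (n : nat) (x : R) : R :=
  match n with
  | O => x
  | S m => phi (phi_iter m x)
  end.

Definition Takagi (x : R) : R :=
  Series (fun n : nat => (/ 2) ^ (S n) * phi_iter (S n) x).

(* k-th binary digit of x (k >= 1): eps_k = floor(2^k x) mod 2.
   For dyadic x this yields the expansion ending in all zeros. *)
Definition bdigit (k : nat) (x : R) : nat :=
  if Z.odd (Int_part (x * 2 ^ k)) then 1%nat else 0%nat.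

Definition digit_avg (x : R) (n : nat) : R :=
  (sum_f_R0 (fun k => INR (bdigit (S k) x)) (pred n)) / INR n.

Definition log2 (y : R) : R := ln y / ln 2.

Definition takagi_quot (x h : R) : R :=
  (Takagi (x + h) - Takagi x) / (h * log2 (1 / Rabs h)).

(* Main.v *)
Require Import Defs.
From Stdlib Require Import Reals ZArith.
From Coquelicot Require Import Coquelicot.
From Stdlib Require Import Lra Lia.
Open Scope R_scope.

Lemma Rabs_le_inv a b : Rabs a <= b -> - b <= a <= b.
Proof. unfold Rabs. destruct Rcase_abs; lra. Qed.

Definition psi (t:R) : R := Rabs (t - IZR (Int_part (t + /2))).

Lemma psi_spec t q : Rabs (t - IZR q) <= /2 -> psi t = Rabs (t - IZR q).
Proof.
  unfold psi. destruct (base_Int_part (t + /2)) as [H1 H2].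
  set (p := Int_part (t + /2)) in *. intros Hq.
  apply Rabs_le_inv in Hq.
  assert (Hp1 : (p <= q + 1)%Z). { apply le_IZR. rewrite plus_IZR. simpl. lra. }
  assert (Hp2 : (q - 1 < p)%Z). { apply lt_IZR. rewrite minus_IZR. simpl. lra. }
  assert (p = q \/ p = q + 1)%Z as [E|E] by lia; rewrite E; auto.
  rewrite plus_IZR in *. simpl.
  assert (t = IZR q + /2).
  { rewrite E, plus_IZR in H1. simpl in H1. lra. }
  subst t. rewrite Rabs_left1 by lra. rewrite Rabs_pos_eq by lra. lra.
Qed.

Lemma psi_near t : Rabs (t - IZR (Int_part (t + /2))) <= /2.
Proof.
  destruct (base_Int_part (t + /2)) as [H1 H2].
  apply Rabs_le. lra.
Qed.

Lemma psi_bounds t : 0 <= psi t <= /2.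
Proof. split. apply Rabs_pos. apply psi_near. Qed.

Lemma psi_periodic u k : psi (u + IZR k) = psi u.
Proof.
  unfold psi at 2.
  rewrite (psi_spec (u + IZR k) (Int_part (u + /2) + k)).
  - f_equal. rewrite plus_IZR. ring.
  - replace (u + IZR k - IZR (Int_part (u + / 2) + k)) with
      (u - IZR (Int_part (u + /2))) by (rewrite plus_IZR; ring).
    apply psi_near.
Qed.

Lemma psi_even u : psi (- u) = psi u.
Proof.
  unfold psi at 2.
  rewrite (psi_spec (- u) (- Int_part (u + /2))).
  - rewrite opp_IZR. replace (- u - - IZR (Int_part (u + / 2))) with
      (- (u - IZR (Int_part (u + / 2)))) by ring. apply Rabs_Ropp.
  - rewrite opp_IZR. replace (- u - - IZR (Int_part (u + / 2))) with
      (- (u - IZR (Int_part (u + / 2)))) by ring. rewrite Rabs_Ropp. apply psi_near.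
Qed.

Lemma psi_double t : psi (2 * t) = psi (2 * psi t).
Proof.
  unfold psi at 3. set (q := Int_part (t + /2)).
  set (s := t - IZR q).
  replace (2 * t) with (2 * s + IZR (2 * q)) by (unfold s; rewrite mult_IZR; simpl; ring).
  rewrite psi_periodic.
  destruct (Rle_dec 0 s).
  - rewrite Rabs_pos_eq; auto.
  - rewrite Rabs_left by lra. rewrite <- psi_even. f_equal. ring.
Qed.

Lemma phi_psi y : 0 <= y <= 1 -> phi y = 2 * psi y.
Proof.
  intros H. unfold phi. destruct (Rle_dec y (1/2)).
  - rewrite (psi_spec y 0). simpl. rewrite Rminus_0_r, Rabs_pos_eq; lra.
    simpl. rewrite Rminus_0_r, Rabs_pos_eq; lra.
  - rewrite (psi_spec y 1). simpl. rewrite Rabs_left1; lra.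
    simpl. rewrite Rabs_left1; lra.
Qed.

Lemma phi_iter_psi n y : 0 <= y <= 1 -> phi_iter (S n) y = 2 * psi (2 ^ n * y).
Proof.
  intros Hy. induction n.
  - simpl. rewrite Rmult_1_l. apply phi_psi; auto.
  - change (phi_iter (S (S n)) y) with (phi (phi_iter (S n) y)).
    rewrite IHn. pose proof (psi_bounds (2^n*y)).
    rewrite phi_psi by lra. rewrite <- psi_double. simpl.
    f_equal. f_equal. ring.
Qed.

Definition Tk (y : R) : R := Series (fun n => (/2)^n * psi (2^n * y)).

Lemma ex_Tk y : ex_series (fun n => (/2)^n * psi (2^n * y)).
Proof.
  apply (@ex_series_le R_AbsRing R_CompleteNormedModule _ (fun n => (/2)^n)).
  - intros n. change (norm ((/2)^n * psi (2^n * y))) with (Rabs ((/2)^n * psi (2^n * y))).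
    pose proof (psi_bounds (2^n*y)). pose proof (pow_lt (/2) n ltac:(lra)).
    rewrite Rabs_pos_eq by nra. nra.
  - apply ex_series_geom. rewrite Rabs_pos_eq; lra.
Qed.

Lemma Takagi_Tk y : 0 <= y <= 1 -> Takagi y = Tk y.
Proof.
  intros Hy. unfold Takagi, Tk. apply Series_ext. intros n.
  rewrite phi_iter_psi by auto. simpl. field.
Qed.

Lemma Tk_step y : Tk y = psi y + /2 * Tk (2 * y).
Proof.
  unfold Tk at 1. rewrite Series_incr_1 by apply ex_Tk.
  simpl. rewrite !Rmult_1_l. f_equal.
  unfold Tk. rewrite <- Series_scal_l. apply Series_ext. intros k.
  simpl. replace (2 * 2 ^ k * y) with (2^k * (2*y)) by ring. ring.
Qed.

Lemma Tk_bounds y : 0 <= Tk y <= 1.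
Proof.
  unfold Tk. split.
  - replace 0 with (Series (fun n => 0 * ((/2)^n * psi (2^n * y)))).
    2:{ rewrite Series_scal_l. ring. }
    apply Series_le.
    + intros n. pose proof (psi_bounds (2^n*y)). pose proof (pow_lt (/2) n ltac:(lra)). split; nra.
    + apply ex_Tk.
  - apply Rle_trans with (Series (fun n => /2 * (/2)^n)).
    + apply Series_le.
      * intros n. pose proof (psi_bounds (2^n*y)). pose proof (pow_lt (/2) n ltac:(lra)). split; nra.
      * apply (ex_series_scal_l (/2) (fun n => (/2)^n)). apply ex_series_geom. rewrite Rabs_pos_eq; lra.
    + rewrite Series_scal_l, Series_geom. lra. rewrite Rabs_pos_eq; lra.
Qed.

Fixpoint Tm (m : nat) (y : R) : R :=
  match m with O => 0 | S k => Tm k y + (/2)^k * psi (2^k * y) end.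

Lemma Tk_split m y : Tk y = Tm m y + (/2)^m * Tk (2^m * y).
Proof.
  induction m.
  - simpl. rewrite !Rmult_1_l. ring.
  - rewrite IHm. rewrite (Tk_step (2^m*y)). simpl.
    replace (2 * (2^m*y)) with (2 * 2^m * y) by ring. ring.
Qed.


Lemma div2_char a q b : a = (2 * q + Z.b2z b)%Z -> Z.div2 a = q /\ Z.odd a = b.
Proof.
  intros H. pose proof (Z.div2_odd a) as E.
  destruct b, (Z.odd a); cbn [Z.b2z] in *; first [split; [lia | reflexivity] | exfalso; lia].
Qed.

Lemma IZR_div2 a : IZR a = 2 * IZR (Z.div2 a) + (if Z.odd a then 1 else 0).
Proof.
  rewrite (Z.div2_odd a) at 1. rewrite plus_IZR, mult_IZR.
  destruct (Z.odd a); simpl; ring.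
Qed.

Fixpoint sl (m:nat) (N:Z) : R :=
  match m with O => 0 | S k => sl k (Z.div2 N) + (if Z.odd N then -1 else 1) end.

Fixpoint tr (m:nat) (N:Z) : nat :=
  match m with O => O | S k => if Z.odd N then S (tr k (Z.div2 N)) else O end.

Lemma inv2_pow m : (/2)^m * 2^m = 1.
Proof. rewrite <- Rpow_mult_distr. rewrite Rinv_l by lra. apply pow1. Qed.

Lemma pow2_pos m : 0 < 2^m.
Proof. apply pow_lt; lra. Qed.

Lemma slope m : forall N y y',
  IZR N <= 2^m * y <= IZR N + 1 -> IZR N <= 2^m * y' <= IZR N + 1 ->
  Tm m y' - Tm m y = (y' - y) * sl m N.
Proof.
  induction m; intros N y y' Hy Hy'.
  - simpl. ring.
  - simpl Tm. simpl sl. set (q := Z.div2 N).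
    pose proof (IZR_div2 N) as HN. fold q in HN.
    simpl pow in Hy, Hy'. rewrite Rmult_assoc in Hy, Hy'.
    set (t := 2^m * y) in *. set (t' := 2^m * y') in *.
    assert (IH := IHm q y y').
    assert (Hq : IZR q <= t <= IZR q + 1 /\ IZR q <= t' <= IZR q + 1).
    { destruct (Z.odd N); split; split; lra. }
    destruct Hq as [Hq1 Hq2].
    replace (Tm m y' + (/ 2) ^ m * psi t' - (Tm m y + (/ 2) ^ m * psi t))
      with ((Tm m y' - Tm m y) + (/2)^m * (psi t' - psi t)) by ring.
    rewrite IH by (unfold t, t' in *; lra).
    assert (Hy2 : (/2)^m * (t' - t) = y' - y).
    { unfold t, t'. replace ((/ 2) ^ m * (2 ^ m * y' - 2 ^ m * y)) with
        (((/ 2) ^ m * 2 ^ m) * (y' - y)) by ring. rewrite inv2_pow. ring. }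
    destruct (Z.odd N).
    + assert (E1 : IZR (q + 1) = IZR q + 1) by (rewrite plus_IZR; reflexivity).
      assert (A1 : Rabs (t - IZR (q + 1)) <= /2) by (rewrite E1; apply Rabs_le; lra).
      assert (A2 : Rabs (t' - IZR (q + 1)) <= /2) by (rewrite E1; apply Rabs_le; lra).
      rewrite (psi_spec t (q + 1) A1), (psi_spec t' (q+1) A2), E1.
      rewrite !Rabs_left1 by lra.
      replace (- (t' - (IZR q + 1)) - - (t - (IZR q + 1))) with (-(t' - t)) by ring.
      lra.
    + rewrite (psi_spec t q), (psi_spec t' q).
      rewrite !Rabs_pos_eq by lra.
      replace (t' - IZR q - (t - IZR q)) with (t' - t) by ring.
      lra.
      all: apply Rabs_le; lra.
Qed.

Lemma sl_incr m : forall N,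
  sl m N + 2 * INR (tr m N) - 2 <= sl m (N + 1) <= sl m N + 2 * INR (tr m N).
Proof.
  induction m; intros N.
  - simpl. lra.
  - simpl sl. simpl tr. set (q := Z.div2 N).
    pose proof (Z.div2_odd N) as E. fold q in E.
    destruct (Z.odd N) eqn:Ho.
    + assert (HH : (N + 1 = 2 * (q + 1) + Z.b2z false)%Z) by (cbn [Z.b2z] in *; lia).
      destruct (div2_char _ _ _ HH) as [D1 D2].
      rewrite D1, D2. specialize (IHm q). rewrite S_INR. lra.
    + assert (HH : (N + 1 = 2 * q + Z.b2z true)%Z) by (cbn [Z.b2z] in *; lia).
      destruct (div2_char _ _ _ HH) as [D1 D2].
      rewrite D1, D2. simpl. lra.
Qed.

Section X.
Variable x : R.
Hypothesis hx0 : 0 <= x.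
Hypothesis hx1 : x < 1.

Definition Nx (m : nat) : Z := Int_part (x * 2^m).

Lemma Nx_bounds m : IZR (Nx m) <= 2^m * x < IZR (Nx m) + 1.
Proof. unfold Nx. destruct (base_Int_part (x * 2^m)). rewrite (Rmult_comm (2^m) x). lra. Qed.

Lemma Nx_S m : Z.div2 (Nx (S m)) = Nx m.
Proof.
  pose proof (Nx_bounds m) as B1. pose proof (Nx_bounds (S m)) as B2.
  simpl pow in B2.
  assert (H1 : (2 * Nx m < Nx (S m) + 1)%Z).
  { apply lt_IZR. rewrite plus_IZR, mult_IZR. simpl. lra. }
  assert (H2 : (Nx (S m) < 2 * Nx m + 2)%Z).
  { apply lt_IZR. rewrite plus_IZR, mult_IZR. simpl. lra. }
  pose proof (Z.div2_odd (Nx (S m))) as E.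
  destruct (Z.odd (Nx (S m))); cbn [Z.b2z] in E; lia.
Qed.

Lemma Nx_0 : Nx 0 = 0%Z.
Proof.
  pose proof (Nx_bounds 0) as B. change (2^0) with 1 in B.
  assert (-1 < Nx 0 < 1)%Z as H. { split; apply lt_IZR; simpl IZR; lra. }
  lia.
Qed.

Lemma bdigit_Nx k : bdigit k x = if Z.odd (Nx k) then 1%nat else 0%nat.
Proof. reflexivity. Qed.

Fixpoint Sd (m : nat) : R :=
  match m with O => 0 | S k => Sd k + INR (bdigit (S k) x) end.

Lemma bdigit_01 k : bdigit k x = 0%nat \/ bdigit k x = 1%nat.
Proof. rewrite bdigit_Nx. destruct (Z.odd (Nx k)); auto. Qed.

Lemma Sd_bounds m : 0 <= Sd m <= INR m.
Proof.
  induction m; simpl Sd. simpl; lra.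
  rewrite S_INR. destruct (bdigit_01 (S m)) as [E|E]; rewrite E; simpl; lra.
Qed.

Lemma sl_Nx m : sl m (Nx m) = INR m - 2 * Sd m.
Proof.
  induction m.
  - simpl. ring.
  - simpl sl. rewrite Nx_S, IHm. simpl Sd. rewrite bdigit_Nx, S_INR.
    destruct (Z.odd (Nx (S m))); simpl; ring.
Qed.

Definition tx (m : nat) : nat := tr m (Nx m).

Lemma tx_S m : tx (S m) = if Z.odd (Nx (S m)) then S (tx m) else O.
Proof. unfold tx. simpl. rewrite Nx_S. reflexivity. Qed.

Lemma tx_le m : (tx m <= m)%nat.
Proof. induction m. unfold tx; simpl; lia. rewrite tx_S. destruct (Z.odd (Nx (S m))); lia. Qed.

Lemma Sd_tx m : Sd m = Sd (m - tx m) + INR (tx m).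
Proof.
  induction m.
  - unfold tx. simpl. ring.
  - rewrite tx_S. simpl Sd at 1. rewrite bdigit_Nx.
    destruct (Z.odd (Nx (S m))) eqn:Ho.
    + replace (S m - S (tx m))%nat with (m - tx m)%nat by lia.
      rewrite IHm at 1. rewrite (S_INR (tx m)). simpl (INR 1). ring.
    + replace (S m - 0)%nat with (S m) by lia. simpl Sd. rewrite bdigit_Nx, Ho. simpl (INR 0). ring.
Qed.

Lemma tx_zero p m : bdigit p x = 0%nat -> (1 <= p <= m)%nat -> (p + tx m <= m)%nat.
Proof.
  intros Hp. induction m; intros Hm. lia.
  rewrite tx_S. destruct (Nat.eq_dec p (S m)) as [E|E].
  - subst p. rewrite bdigit_Nx in Hp. destruct (Z.odd (Nx (S m))); [discriminate|]. lia.
  - destruct (Z.odd (Nx (S m))); [|lia]. specialize (IHm ltac:(lia)). lia.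
Qed.

Lemma tx_lt m : (tx m < m)%nat -> bdigit (m - tx m) x = 0%nat.
Proof.
  induction m; intros H. lia.
  revert H. rewrite tx_S. destruct (Z.odd (Nx (S m))) eqn:Ho; intros H.
  - replace (S m - S (tx m))%nat with (m - tx m)%nat by lia. apply IHm. lia.
  - replace (S m - 0)%nat with (S m) by lia. rewrite bdigit_Nx, Ho. reflexivity.
Qed.

Lemma tx_ones p m : (p <= m)%nat -> (forall i, (p < i <= m)%nat -> bdigit i x = 1%nat) ->
  (m - p <= tx m)%nat.
Proof.
  induction m; intros Hpm Hi. lia.
  rewrite tx_S. destruct (Nat.eq_dec p (S m)) as [E|E]. lia.
  assert (Hd : bdigit (S m) x = 1%nat) by (apply Hi; lia).
  rewrite bdigit_Nx in Hd. destruct (Z.odd (Nx (S m))); [|discriminate].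
  specialize (IHm ltac:(lia) ltac:(intros i Hi'; apply Hi; lia)). lia.
Qed.



Lemma Tk_diff m a b : Rabs ((Tk b - Tk a) - (Tm m b - Tm m a)) <= (/2)^m.
Proof.
  rewrite (Tk_split m a), (Tk_split m b).
  replace (Tm m b + (/ 2) ^ m * Tk (2 ^ m * b) - (Tm m a + (/ 2) ^ m * Tk (2 ^ m * a)) -
     (Tm m b - Tm m a)) with ((/2)^m * (Tk (2^m*b) - Tk (2^m*a))) by ring.
  rewrite Rabs_mult, (Rabs_pos_eq ((/2)^m)) by (apply pow_le; lra).
  pose proof (Tk_bounds (2^m*b)). pose proof (Tk_bounds (2^m*a)).
  pose proof (pow_lt (/2) m ltac:(lra)).
  assert (Rabs (Tk (2 ^ m * b) - Tk (2 ^ m * a)) <= 1) by (apply Rabs_le; lra).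
  nra.
Qed.

Definition cx (m : nat) : R := (IZR (Nx m) + 1) * (/2)^m.

Lemma cx_prop m : 2^m * cx m = IZR (Nx m) + 1.
Proof. unfold cx. replace (2 ^ m * ((IZR (Nx m) + 1) * (/ 2) ^ m)) with
  ((IZR (Nx m) + 1) * ((/2)^m * 2^m)) by ring. rewrite inv2_pow. ring. Qed.

Lemma x_lt_cx m : x < cx m.
Proof.
  pose proof (cx_prop m). pose proof (Nx_bounds m). pose proof (pow2_pos m). nra.
Qed.

Lemma Tm_cross m h : 0 < h -> IZR (Nx m) + 1 <= 2^m * (x+h) <= IZR (Nx m) + 2 ->
  Tm m (x+h) - Tm m x = (cx m - x) * sl m (Nx m) + (x + h - cx m) * sl m (Nx m + 1).
Proof.
  intros Hh H. pose proof (cx_prop m). pose proof (Nx_bounds m).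
  replace (Tm m (x+h) - Tm m x) with ((Tm m (x+h) - Tm m (cx m)) + (Tm m (cx m) - Tm m x)) by ring.
  rewrite (slope m (Nx m + 1) (cx m) (x+h)), (slope m (Nx m) x (cx m)).
  ring.
  all: rewrite ?plus_IZR; simpl IZR; lra.
Qed.

Lemma Tm_same m h : 0 < h -> 2^m * (x+h) <= IZR (Nx m) + 1 ->
  Tm m (x+h) - Tm m x = h * sl m (Nx m).
Proof.
  intros Hh H. pose proof (Nx_bounds m). pose proof (pow2_pos m).
  rewrite (slope m (Nx m) x (x+h)). ring. lra. nra.
Qed.

Lemma core_upper m h : 0 < h <= (/2)^m ->
  Rabs ((Tk (x+h) - Tk x) - h * sl m (Nx m)) <= h * (2 * INR (tx m) + 2) + (/2)^m.
Proof.
  intros Hh. pose proof (Tk_diff m x (x+h)) as TD.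
  pose proof (Nx_bounds m). pose proof (pow2_pos m). pose proof (inv2_pow m).
  assert (Hu : 2^m * h <= 1) by nra.
  assert (Ht : 0 <= INR (tx m)) by apply pos_INR.
  destruct (Rle_dec (2^m * (x+h)) (IZR (Nx m) + 1)) as [Hs|Hs].
  - rewrite Tm_same in TD by lra.
    apply Rle_trans with ((/2)^m); [exact TD|]. nra.
  - rewrite Tm_cross in TD by lra.
    pose proof (sl_incr m (Nx m)) as SI. unfold tx in *.
    pose proof (cx_prop m). pose proof (x_lt_cx m).
    assert (Hc : 0 < x + h - cx m <= h) by nra.
    set (D := sl m (Nx m + 1) - sl m (Nx m)).
    assert (E : (Tk (x + h) - Tk x) - h * sl m (Nx m) =
      ((Tk (x + h) - Tk x) - ((cx m - x) * sl m (Nx m) + (x + h - cx m) * sl m (Nx m + 1)))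
      + (x + h - cx m) * D) by (unfold D; ring).
    rewrite E. eapply Rle_trans. apply Rabs_triang.
    rewrite Rabs_mult, (Rabs_pos_eq (x+h - cx m)) by lra.
    assert (Rabs D <= 2 * INR (tr m (Nx m)) + 2) by (apply Rabs_le; unfold D; lra).
    assert ((x + h - cx m) * Rabs D <= h * (2 * INR (tr m (Nx m)) + 2)).
    { apply Rmult_le_compat; try lra. apply Rabs_pos. }
    lra.
Qed.

Lemma core_lower m h : 0 < h -> IZR (Nx m) + 1 <= 2^m * (x+h) <= IZR (Nx m) + 2 ->
  (Tk (x+h) - Tk x) >= h * sl m (Nx m) + (x + h - cx m) * (2 * INR (tx m) - 2) - (/2)^m.
Proof.
  intros Hh H. pose proof (Tk_diff m x (x+h)) as TD.
  rewrite Tm_cross in TD by lra. apply Rabs_le_inv in TD.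
  pose proof (sl_incr m (Nx m)) as SI. unfold tx in *.
  pose proof (cx_prop m). pose proof (x_lt_cx m). pose proof (pow2_pos m).
  assert (Hc : 0 <= x + h - cx m) by nra.
  assert ((x + h - cx m) * (sl m (Nx m) + 2 * INR (tr m (Nx m)) - 2) <= (x + h - cx m) * sl m (Nx m + 1))
    by (apply Rmult_le_compat_l; lra).
  nra.
Qed.


Lemma nat_large r : exists N : nat, r < INR N.
Proof.
  destruct (archimed (Rabs r)) as [H1 H2].
  exists (Z.to_nat (up (Rabs r))).
  assert (0 <= up (Rabs r))%Z.
  { apply le_IZR. pose proof (Rabs_pos r). simpl. lra. }
  rewrite INR_IZR_INZ, Z2Nat.id by auto.
  pose proof (Rle_abs r). lra.
Qed.

Lemma half_pow_le1 k : (/2)^k <= 1.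
Proof. induction k; simpl; lra. Qed.

Lemma half_pow_mono n k : (n <= k)%nat -> (/2)^k <= (/2)^n.
Proof.
  intros H. replace k with (n + (k - n))%nat by lia.
  rewrite pow_add. pose proof (pow_lt (/2) n ltac:(lra)).
  pose proof (half_pow_le1 (k-n)). nra.
Qed.

Lemma half_pow_exists h : 0 < h <= 1 -> exists m, (/2)^(S m) < h <= (/2)^m.
Proof.
  intros Hh.
  destruct (pow_lt_1_zero (/2) ltac:(rewrite Rabs_pos_eq; lra) h ltac:(lra)) as [N HN].
  specialize (HN N (le_n N)). rewrite Rabs_pos_eq in HN by (apply pow_le; lra).
  revert HN. clear -Hh. induction N; intros HN.
  - simpl in HN. lra.
  - destruct (Rle_dec h ((/2)^N)). exists N. lra. apply IHN. lra.
Qed.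

Lemma log_bounds m h : (/2)^(S m) < h <= (/2)^m -> INR m <= log2 (1/h) < INR m + 1.
Proof.
  intros [H1 H2]. pose proof (pow_lt (/2) (S m) ltac:(lra)).
  rewrite pow_inv in *. pose proof (pow2_pos m). pose proof (pow2_pos (S m)).
  assert (Hh : 0 < h) by lra.
  assert (A1 : 2^m <= 1/h).
  { unfold Rdiv. rewrite Rmult_1_l. rewrite <- (Rinv_inv (2^m)).
    apply Rinv_le_contravar; auto. }
  assert (A2 : 1/h < 2^(S m)).
  { unfold Rdiv. rewrite Rmult_1_l. rewrite <- (Rinv_inv (2^(S m))).
    apply Rinv_lt_contravar; auto. nra. }
  pose proof ln_lt_2 as L2.
  apply ln_le in A1; [|auto]. apply ln_increasing in A2; [|unfold Rdiv; rewrite Rmult_1_l; apply Rinv_0_lt_compat; auto].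
  rewrite ln_pow in A1, A2 by lra. rewrite S_INR in A2.
  unfold log2. split.
  - apply Rmult_le_reg_r with (ln 2). lra. unfold Rdiv. rewrite Rmult_assoc, Rinv_l by lra. lra.
  - apply Rmult_lt_reg_r with (ln 2). lra. unfold Rdiv. rewrite Rmult_assoc, Rinv_l by lra. lra.
Qed.

Lemma abs_div_le u v w : 0 < v -> Rabs u <= w * v -> Rabs (u / v) <= w.
Proof.
  intros Hv H. rewrite Rabs_div by lra. rewrite (Rabs_pos_eq v) by lra.
  apply Rmult_le_reg_r with v; auto. unfold Rdiv. rewrite Rmult_assoc, Rinv_l by lra. lra.
Qed.

Definition Qv (h : R) : R := (Tk (x+h) - Tk x) / (h * log2 (1/h)).

Lemma quot_eq h : 0 < h < 1 - x -> takagi_quot x h = Qv h.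
Proof.
  intros H. unfold takagi_quot, Qv. rewrite !Takagi_Tk by lra.
  rewrite Rabs_pos_eq by lra. reflexivity.
Qed.

Lemma sl_abs m : Rabs (sl m (Nx m)) <= INR m.
Proof. rewrite sl_Nx. pose proof (Sd_bounds m). apply Rabs_le. lra. Qed.

Lemma Q_bound m h : (1 <= m)%nat -> (/2)^(S m) < h <= (/2)^m ->
  Rabs (Qv h - sl m (Nx m) / INR m) <= (2 * INR (tx m) + 5) / INR m.
Proof.
  intros Hm Hh. pose proof (log_bounds m h Hh) as LB.
  set (L := log2 (1/h)) in *.
  assert (Hm' : 1 <= INR m) by (apply (le_INR 1); auto).
  assert (Hp : 0 < h) by (pose proof (pow_lt (/2) (S m) ltac:(lra)); lra).
  pose proof (core_upper m h ltac:(lra)) as CU.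
  set (a := Tk (x + h) - Tk x) in *. set (s := sl m (Nx m)) in *.
  pose proof (sl_abs m) as SA. fold s in SA.
  assert (Hw : (/2)^m < 2 * h) by (simpl in Hh; lra).
  assert (Ht : 0 <= INR (tx m)) by apply pos_INR.
  assert (E : Qv h - s / INR m = (a - h * s) / (h * L) + s * (INR m - L) / (L * INR m)).
  { unfold Qv. fold a. fold L. field. split; lra. }
  rewrite E. eapply Rle_trans. apply Rabs_triang.
  assert (B1 : Rabs ((a - h * s) / (h * L)) <= (2 * INR (tx m) + 4) / INR m).
  { apply abs_div_le. nra.
    apply Rle_trans with (h * (2 * INR (tx m) + 4)). lra.
    replace ((2 * INR (tx m) + 4) / INR m * (h * L)) with (h * (2 * INR (tx m) + 4) * (L / INR m)) by (field; lra).
    assert (1 <= L / INR m).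
    { replace (L / INR m) with (1 + (L - INR m) * / INR m) by (field; lra).
      assert (0 <= (L - INR m) * / INR m). { apply Rmult_le_pos. lra. left; apply Rinv_0_lt_compat; lra. }
      lra. }
    rewrite <- (Rmult_1_r (h * (2 * INR (tx m) + 4))) at 1.
    apply Rmult_le_compat_l; [nra | auto]. }
  assert (B2 : Rabs (s * (INR m - L) / (L * INR m)) <= 1 / INR m).
  { apply abs_div_le. nra. rewrite Rabs_mult.
    replace (1 / INR m * (L * INR m)) with L by (field; lra).
    assert (Rabs (INR m - L) <= 1) by (apply Rabs_le; lra).
    apply Rle_trans with (INR m * 1). apply Rmult_le_compat; auto using Rabs_pos. lra. }
  replace ((2 * INR (tx m) + 5) / INR m) with ((2 * INR (tx m) + 4) / INR m + 1 / INR m) by (field; lra).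
  lra.
Qed.


Lemma filter_intro L0 (f : R -> R) :
  (forall eps, 0 < eps -> exists del, 0 < del /\ forall h, 0 < h < del -> Rabs (f h - L0) < eps) ->
  filterlim f (at_right 0) (locally L0).
Proof.
  intros H. apply filterlim_locally. intros eps.
  destruct (H eps (cond_pos eps)) as [del [Hd Hf]].
  exists (mkposreal del Hd). intros y Hy Hy0.
  change (Rabs (f y - L0) < eps). apply Hf. split; auto.
  change (Rabs (y - 0) < del) in Hy. rewrite Rminus_0_r, Rabs_pos_eq in Hy; lra.
Qed.

Lemma filter_elim L0 (f : R -> R) : filterlim f (at_right 0) (locally L0) ->
  forall eps, 0 < eps -> exists del, 0 < del /\ forall h, 0 < h < del -> Rabs (f h - L0) < eps.
Proof.
  intros H eps He. apply filterlim_locally with (eps := mkposreal eps He) in H.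
  destruct H as [del Hd]. exists del. split. apply cond_pos.
  intros h Hh. apply (Hd h). change (Rabs (h - 0) < del). rewrite Rminus_0_r, Rabs_pos_eq; lra. lra.
Qed.

Definition conv (u : nat -> R) (l : R) :=
  forall eps, 0 < eps -> exists N, forall n, (N <= n)%nat -> Rabs (u n - l) < eps.

Lemma small_inv a e : 0 < e -> exists N, forall n, (N <= n)%nat -> a / INR n < e /\ 0 < INR n.
Proof.
  intros He. destruct (nat_large (Rmax 0 (a / e))) as [N HN].
  exists N. intros n Hn. apply le_INR in Hn.
  assert (0 < INR n) by (pose proof (Rmax_l 0 (a/e)); lra).
  split; auto. pose proof (Rmax_r 0 (a/e)).
  apply Rmult_lt_reg_r with (INR n); auto. unfold Rdiv. rewrite Rmult_assoc, Rinv_l by lra.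
  apply Rmult_lt_reg_r with (/ e). apply Rinv_0_lt_compat; auto.
  replace (e * INR n * / e) with (INR n) by (field; lra). lra.
Qed.

Lemma m_large M h m : 0 < h < (/2)^M -> (/2)^(S m) < h -> (M <= m)%nat.
Proof.
  intros H1 H2. destruct (le_lt_dec M m); auto.
  pose proof (half_pow_mono (S m) M ltac:(lia)). lra.
Qed.

Lemma GL L0 : conv (fun m => sl m (Nx m) / INR m) L0 -> conv (fun m => INR (tx m) / INR m) 0 ->
  filterlim (takagi_quot x) (at_right 0) (locally L0).
Proof.
  intros HD HT. apply filter_intro. intros eps He.
  destruct (HD (eps/2) ltac:(lra)) as [N1 H1].
  destruct (HT (eps/8) ltac:(lra)) as [N2 H2].
  destruct (small_inv 5 (eps/4) ltac:(lra)) as [N3 H3].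
  set (M := max N1 (max N2 (max N3 1))).
  exists (Rmin ((/2)^M) (1 - x)). split.
  { apply Rmin_glb_lt. apply pow_lt; lra. lra. }
  intros h Hh. pose proof (Rmin_l ((/2)^M) (1 - x)). pose proof (Rmin_r ((/2)^M) (1 - x)).
  pose proof (half_pow_le1 M).
  destruct (half_pow_exists h ltac:(lra)) as [m Hm].
  assert (HM : (M <= m)%nat) by (apply (m_large M h m); lra).
  rewrite quot_eq by lra.
  specialize (H1 m ltac:(lia)). specialize (H2 m ltac:(lia)). specialize (H3 m ltac:(lia)).
  pose proof (Q_bound m h ltac:(lia) Hm) as QB.
  rewrite Rminus_0_r in H2. apply Rabs_def2 in H2.
  replace ((2 * INR (tx m) + 5) / INR m) with (2 * (INR (tx m) / INR m) + 5 / INR m) in QB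
    by (field; lra).
  replace (Qv h - L0) with ((Qv h - sl m (Nx m) / INR m) + (sl m (Nx m) / INR m - L0)) by ring.
  eapply Rle_lt_trans. apply Rabs_triang. lra.
Qed.


Lemma sum_Sd n : sum_f_R0 (fun k => INR (bdigit (S k) x)) n = Sd (S n).
Proof. induction n. simpl. ring. simpl sum_f_R0. rewrite IHn. reflexivity. Qed.

Lemma Sd_conv (d1 : R) : is_lim_seq (fun n => digit_avg x (S n)) d1 -> conv (fun m => Sd m / INR m) d1.
Proof.
  intros hd. apply is_lim_seq_spec in hd. intros eps He.
  unfold is_lim_seq' in hd. destruct (hd (mkposreal eps He)) as [N HN]. exists (S N). intros n Hn.
  destruct n. lia. specialize (HN n ltac:(lia)). simpl in HN.
  unfold digit_avg in HN. simpl pred in HN. rewrite sum_Sd in HN. exact HN.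
Qed.

Lemma sl_conv d1 : conv (fun m => Sd m / INR m) d1 -> conv (fun m => sl m (Nx m) / INR m) (1 - d1 - d1).
Proof.
  intros H eps He. destruct (H (eps/2) ltac:(lra)) as [N HN]. exists (max N 1).
  intros n Hn. specialize (HN n ltac:(lia)).
  assert (0 < INR n) by (apply lt_0_INR; lia).
  rewrite sl_Nx. replace ((INR n - 2 * Sd n) / INR n - (1 - d1 - d1)) with (-2 * (Sd n / INR n - d1))
    by (field; lra).
  rewrite Rabs_mult. rewrite Rabs_left by lra. lra.
Qed.

Lemma Sd_mult d1 : conv (fun m => Sd m / INR m) d1 -> forall eta, 0 < eta ->
  exists N, forall n, (N <= n)%nat -> Rabs (Sd n - d1 * INR n) <= eta * INR n.
Proof.
  intros H eta He. destruct (H eta He) as [N HN]. exists N. intros n Hn.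
  destruct n. simpl. rewrite Rmult_0_r, Rminus_0_r, Rabs_R0. lra.
  specialize (HN (S n) Hn). assert (0 < INR (S n)) by (apply lt_0_INR; lia).
  replace (Sd (S n) - d1 * INR (S n)) with (INR (S n) * (Sd (S n) / INR (S n) - d1)) by (field; lra).
  rewrite Rabs_mult, (Rabs_pos_eq (INR (S n))) by lra. nra.
Qed.

Lemma Tconv_d1 d1 : d1 < 1 -> conv (fun m => Sd m / INR m) d1 -> conv (fun m => INR (tx m) / INR m) 0.
Proof.
  intros Hd H eps He.
  set (eta := Rmin (eps * (1 - d1) / 4) ((1 - d1) / 4)).
  assert (He1 : 0 < eta) by (apply Rmin_glb_lt; nra).
  assert (He2 : eta <= eps * (1 - d1) / 4) by apply Rmin_l.
  assert (He3 : eta <= (1 - d1) / 4) by apply Rmin_r.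
  destruct (Sd_mult d1 H eta He1) as [N HN].
  destruct (nat_large (2 * INR N / (1 - d1))) as [K HK].
  exists (max (max N K) 1). intros m Hm.
  assert (Hm0 : 0 < INR m) by (apply lt_0_INR; lia).
  assert (HmK : INR K <= INR m) by (apply le_INR; lia).
  pose proof (tx_le m) as Htm. pose proof (Sd_tx m) as ST.
  set (t := tx m) in *. set (k := (m - t)%nat) in *.
  assert (Ek : INR k = INR m - INR t) by (unfold k; rewrite minus_INR; auto).
  pose proof (Sd_bounds k). pose proof (pos_INR t).
  assert (Hmain : INR t < eps * INR m).
  { pose proof (HN m ltac:(lia)) as Bm. apply Rabs_le_inv in Bm.
    destruct (le_lt_dec N k) as [Hk|Hk].
    - pose proof (HN k Hk) as Bk. apply Rabs_le_inv in Bk.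
      assert (INR k <= INR m) by lra.
      assert (A : (1 - d1) * INR t <= (1 - d1) * (eps * INR m / 2)) by nra.
      apply Rmult_le_reg_l in A; [|lra]. assert (0 < eps * INR m) by (apply Rmult_lt_0_compat; lra). lra.
    - exfalso. assert (INR k < INR N) by (apply lt_INR; auto).
      assert (A1 : (1 - d1 - eta) * INR m < INR N) by nra.
      assert (A2 : 2 * INR N < (1 - d1) * INR m).
      { apply Rmult_lt_reg_r with (/ (1 - d1)). apply Rinv_0_lt_compat; lra.
        replace ((1 - d1) * INR m * / (1 - d1)) with (INR m) by (field; lra). unfold Rdiv in HK. lra. }
      pose proof (pos_INR N). nra. }
  rewrite Rminus_0_r, Rabs_pos_eq.
  - apply Rmult_lt_reg_r with (INR m); auto. unfold Rdiv. rewrite Rmult_assoc, Rinv_l by lra. lra.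
  - unfold Rdiv. apply Rmult_le_pos; auto. left; apply Rinv_0_lt_compat; auto.
Qed.


Lemma b_mono (b : nat -> nat) : (forall n, (b n < b (S n))%nat) -> forall n n', (n < n')%nat -> (b n < b n')%nat.
Proof.
  intros Hb n n' H. induction H. apply Hb. specialize (Hb m). lia.
Qed.

Lemma b_mono_le (b : nat -> nat) : (forall n, (b n < b (S n))%nat) -> forall n n', (n <= n')%nat -> (b n <= b n')%nat.
Proof.
  intros Hb n n' H. destruct (Nat.eq_dec n n'). subst; lia. pose proof (b_mono b Hb n n' ltac:(lia)). lia.
Qed.

Lemma b_ge (b : nat -> nat) : (forall n, (b n < b (S n))%nat) -> forall n, (n <= b n)%nat.
Proof. intros Hb n. induction n. lia. specialize (Hb n). lia. Qed.

Section B.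
Variable b : nat -> nat.
Hypothesis Hb : forall n, (b n < b (S n))%nat.
Hypothesis Hbd : forall k : nat, (1 <= k)%nat -> (bdigit k x = 0%nat <-> exists n, b n = k).
Hypothesis Hb1 : forall n, (1 <= b n)%nat.

Lemma bzero n : bdigit (b n) x = 0%nat.
Proof. apply (Hbd (b n) (Hb1 n)). exists n. reflexivity. Qed.

Lemma Tconv_b : conv (fun n => INR (b (S n)) / INR (b n)) 1 -> conv (fun m => INR (tx m) / INR m) 0.
Proof.
  intros H eps He. destruct (H eps He) as [J HJ]. exists (b J). intros m Hm.
  pose proof (tx_zero (b J) m (bzero J) ltac:(pose proof (Hb1 J); lia)) as T1.
  pose proof (Hb1 J).
  assert (Hlt : (tx m < m)%nat) by lia.
  pose proof (tx_lt m Hlt) as Hz.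
  destruct (proj1 (Hbd (m - tx m) ltac:(lia)) Hz) as [j Hj].
  assert (HJj : (J <= j)%nat).
  { destruct (le_lt_dec J j); auto. pose proof (b_mono b Hb j J l). lia. }
  assert (Hnext : (m < b (S j))%nat).
  { destruct (le_lt_dec (b (S j)) m) as [l|l]; auto.
    pose proof (tx_zero (b (S j)) m (bzero (S j)) ltac:(pose proof (Hb1 (S j)); lia)).
    specialize (Hb j). lia. }
  specialize (HJ j HJj).
  pose proof (Hb1 j). assert (Hbj : 1 <= INR (b j)) by (apply (le_INR 1); auto).
  assert (Hr : INR (b (S j)) - INR (b j) < eps * INR (b j)).
  { apply Rabs_def2 in HJ. destruct HJ as [HJ _].
    apply Rmult_lt_compat_r with (r := INR (b j)) in HJ; [|lra].
    replace ((INR (b (S j)) / INR (b j) - 1) * INR (b j)) with (INR (b (S j)) - INR (b j)) in HJ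
      by (field; lra). exact HJ. }
  assert (Ht : INR (tx m) + INR (b j) = INR m) by (rewrite <- plus_INR; f_equal; lia).
  assert (Hs : INR m + 1 <= INR (b (S j))) by (rewrite <- S_INR; apply le_INR; lia).
  pose proof (pos_INR (tx m)). assert (Hmb : INR (b j) <= INR m) by lra.
  assert (Hm0 : 0 < INR m) by lra.
  pose proof (pos_INR (tx m)).
  rewrite Rminus_0_r, Rabs_pos_eq.
  - apply Rmult_lt_reg_r with (INR m); auto. unfold Rdiv. rewrite Rmult_assoc, Rinv_l by lra. nra.
  - unfold Rdiv. apply Rmult_le_pos; auto. left; apply Rinv_0_lt_compat; auto.
Qed.
Lemma tx_bzero n : tx (b n) = 0%nat.
Proof.
  pose proof (Hb1 n). pose proof (bzero n) as Z.
  destruct (b n) as [|k] eqn:E. lia.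
  rewrite tx_S. rewrite bdigit_Nx in Z. destruct (Z.odd (Nx (S k))); [discriminate|reflexivity].
Qed.

Lemma small_pow c : 0 < c -> exists N, forall n, (N <= n)%nat -> (/2)^n < c.
Proof.
  intros Hc. destruct (pow_lt_1_zero (/2) ltac:(rewrite Rabs_pos_eq; lra) c Hc) as [N HN].
  exists N. intros n Hn. specialize (HN n Hn). rewrite Rabs_pos_eq in HN; auto. apply pow_le; lra.
Qed.

Lemma C_lemma L0 l : conv (fun m => sl m (Nx m) / INR m) L0 ->
  filterlim (takagi_quot x) (at_right 0) (locally l) -> l = L0.
Proof.
  intros HD HF. destruct (Req_dec l L0) as [E|E]; auto. exfalso.
  set (eps := Rabs (l - L0) / 2).
  assert (He : 0 < eps) by (unfold eps; pose proof (Rabs_pos_lt (l - L0) ltac:(lra)); lra).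
  destruct (filter_elim l _ HF eps He) as [del [Hdel HQ]].
  destruct (HD (eps/2) ltac:(lra)) as [N1 H1].
  destruct (small_inv 5 (eps/2) ltac:(lra)) as [N3 H3].
  destruct (small_pow (Rmin del (1 - x)) ltac:(apply Rmin_glb_lt; lra)) as [N4 H4].
  set (n := max N1 (max N3 (max N4 1))).
  pose proof (b_ge b Hb n) as Hbn. set (m := b n) in *.
  specialize (H1 m ltac:(lia)). specialize (H3 m ltac:(lia)). specialize (H4 m ltac:(lia)).
  pose proof (Rmin_l del (1-x)). pose proof (Rmin_r del (1-x)).
  pose proof (pow_lt (/2) m ltac:(lra)) as Hw.
  specialize (HQ ((/2)^m) ltac:(lra)). rewrite quot_eq in HQ by lra.
  pose proof (Q_bound m ((/2)^m) ltac:(unfold m; apply Hb1) ltac:(simpl; lra)) as QB.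
  unfold m in QB. rewrite tx_bzero in QB. fold m in QB. simpl INR in QB.
  replace ((2 * 0 + 5) / INR m) with (5 / INR m) in QB by (field; lra).
  assert (Rabs (l - L0) <= Rabs (l - Qv ((/2)^m)) + Rabs (Qv ((/2)^m) - sl m (Nx m) / INR m)
     + Rabs (sl m (Nx m) / INR m - L0)).
  { replace (l - L0) with ((l - Qv ((/2)^m)) + (Qv ((/2)^m) - sl m (Nx m) / INR m)
     + (sl m (Nx m) / INR m - L0)) by ring.
    eapply Rle_trans. apply Rabs_triang. apply Rplus_le_compat_r. apply Rabs_triang. }
  rewrite Rabs_minus_sym in HQ. unfold eps in *. lra.
Qed.

Lemma D_lemma : filterlim (takagi_quot x) (at_right 0) (locally (-1)) ->
  conv (fun n => INR (b (S n)) / INR (b n)) 1.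
Proof.
  intros HF eps He.
  set (e := Rmin eps 1).
  assert (He0 : 0 < e) by (apply Rmin_glb_lt; lra).
  assert (He1 : e <= eps) by apply Rmin_l. assert (He2 : e <= 1) by apply Rmin_r.
  set (eta := e / 12).
  destruct (filter_elim (-1) _ HF eta ltac:(unfold eta; lra)) as [del [Hdel HQ]].
  destruct (small_pow (Rmin del (1 - x)) ltac:(apply Rmin_glb_lt; lra)) as [N4 H4].
  destruct (small_inv 7 eta ltac:(unfold eta; lra)) as [N5 H5].
  destruct (small_inv 1 (e/2) ltac:(lra)) as [N6 H6].
  exists (S (S (max N4 (max N5 N6)))). intros j Hj.
  pose proof (b_ge b Hb j) as Hbj. pose proof (Hb j) as Hbj1.
  destruct (b (S j)) as [|[|m']] eqn:Ebs; try lia.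
  set (m := S m').
  set (p := b j) in *.
  assert (Hpm : (p <= m)%nat) by (unfold m; lia).
  assert (Hz : bdigit (S m) x = 0%nat) by (unfold m; rewrite <- Ebs; apply bzero).
  assert (Hones : forall i, (p < i <= m)%nat -> bdigit i x = 1%nat).
  { intros i Hi. destruct (bdigit_01 i) as [Zi|Zi]; auto. exfalso.
    destruct (proj1 (Hbd i ltac:(lia)) Zi) as [n Hn].
    destruct (le_lt_dec n j).
    - pose proof (b_mono_le b Hb n j l) as HH. unfold p in Hi. lia.
    - pose proof (b_mono_le b Hb (S j) n l) as HH. rewrite Ebs in HH. unfold m in Hi. lia. }
  pose proof (tx_ones p m Hpm Hones) as Htx.
  rewrite bdigit_Nx in Hz. destruct (Z.odd (Nx (S m))) eqn:Ho; [discriminate|].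
  pose proof (IZR_div2 (Nx (S m))) as D2. rewrite Ho, Nx_S in D2.
  pose proof (Nx_bounds (S m)) as B2. pose proof (Nx_bounds m) as B1.
  change (2 ^ S m) with (2 * 2 ^ m) in B2. rewrite D2 in B2.
  pose proof (inv2_pow m) as IW. pose proof (pow2_pos m) as Hu.
  set (u := 2^m) in *. set (w := (/2)^m) in *. set (N := IZR (Nx m)) in *.
  assert (Hw : 0 < w) by (unfold w; apply pow_lt; lra).
  set (h := cx m - x + w / 2).
  assert (Hcx : cx m = (N + 1) * w) by reflexivity.
  assert (Hw' : (/2)^m' = 2 * w) by (unfold w, m; simpl; field).
  assert (HwS : (/2)^(S m') = w) by reflexivity.
  assert (EN : IZR (Nx m) = N) by reflexivity.
  assert (Eu : 2^m = u) by reflexivity. assert (Ew : (/2)^m = w) by reflexivity.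
  clearbody N u w.
  assert (Huh : u * h = N + 1 - u * x + /2).
  { unfold h. rewrite Hcx. replace (u * ((N + 1) * w - x + w / 2)) with ((N+1) * (w * u) - u * x + (w * u)/2) by (unfold Rdiv; ring_simplify; ring).
    rewrite IW. field. }
  assert (Hh1 : w < h).
  { assert (1 < u * h) by lra. replace h with (w * (u * h)) by (rewrite <- Rmult_assoc, IW; ring). nra. }
  assert (Hh2 : h <= 3 / 2 * w).
  { assert (u * h <= 3/2) by lra. replace h with (w * (u * h)) by (rewrite <- Rmult_assoc, IW; ring). nra. }
  assert (Hux : u * (x + h) = N + 3/2) by lra.
  pose proof (core_lower m h ltac:(lra) ltac:(rewrite Eu, EN; lra)) as CL. rewrite Ew in CL.
  assert (Hxc : x + h - cx m = w / 2) by (unfold h; ring).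
  rewrite Hxc in CL.
  pose proof (log_bounds m' h ltac:(rewrite HwS, Hw'; lra)) as LB.
  assert (Hm'm : INR m = INR m' + 1) by (unfold m; apply S_INR).
  specialize (H4 m' ltac:(lia)). specialize (H5 m' ltac:(lia)). specialize (H6 m ltac:(unfold m; lia)).
  pose proof (Rmin_l del (1-x)). pose proof (Rmin_r del (1-x)).
  specialize (HQ h ltac:(lra)). rewrite quot_eq in HQ by lra.
  apply Rabs_def2 in HQ. destruct HQ as [HQ _].
  set (L := log2 (1/h)) in *.
  destruct H5 as [H5 Hm'0].
  assert (HL : 0 < L) by lra.
  assert (Hdel' : Tk (x + h) - Tk x < (-1 + eta) * (h * L)).
  { assert (EQ : Qv h * (h * L) = Tk (x + h) - Tk x) by (unfold Qv; fold L; field; nra).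
    assert (0 < h * L) by nra.
    assert ((Qv h + 1) * (h * L) < eta * (h * L)) by (apply Rmult_lt_compat_r; lra).
    lra. }
  pose proof (sl_Nx m) as SL. pose proof (Sd_bounds m) as SB.
  assert (Hs : - INR m <= sl m (Nx m)) by lra.
  set (s := sl m (Nx m)) in *. set (t := INR (tx m)) in *.
  assert (Ht0 : 0 <= t) by apply pos_INR.
  assert (K1 : w * t < h * (INR m - L) + 2 * w + eta * h * L) by nra.
  assert (K2 : w * t < 3/2 * w + 2 * w + eta * (3/2 * w) * INR m).
  { assert (h * (INR m - L) <= 3/2 * w) by nra.
    assert (eta * h * L <= eta * (3/2 * w) * INR m).
    { assert (0 < eta) by (unfold eta; lra).
      apply Rmult_le_compat. nra. lra. nra. lra. }
    lra. }
  assert (K3 : t < 7/2 + 3/2 * eta * INR m).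
  { apply Rmult_lt_reg_l with w; auto. nra. }
  assert (K4 : 7 < eta * INR m').
  { apply Rmult_lt_reg_r with (/ INR m'). apply Rinv_0_lt_compat; auto.
    replace (eta * INR m' * / INR m') with eta by (field; lra). exact H5. }
  assert (K5 : t < 2 * eta * INR m) by nra.
  assert (Hpr : INR m - INR p <= t) by (unfold t; rewrite <- minus_INR by auto; apply le_INR; auto).
  destruct H6 as [H6 Hm0].
  assert (K6 : 2 < e * INR m).
  { apply Rmult_lt_reg_r with (/ INR m). apply Rinv_0_lt_compat; auto.
    replace (e * INR m * / INR m) with e by (field; lra). unfold Rdiv in H6. lra. }
  assert (Hp0 : 0 < INR p) by (apply lt_0_INR; pose proof (Hb1 j); unfold p; lia).
  assert (P1 : INR m - 2*eta*INR m < INR p) by lra.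
  assert (P2 : e * (INR m - 2*eta*INR m) <= e * INR p) by (apply Rmult_le_compat_l; lra).
  assert (P3 : e * (e * INR m) <= 1 * (e * INR m)) by (apply Rmult_le_compat_r; nra).
  assert (K7 : INR m + 1 - INR p < e * INR p).
  { assert (Q1 : INR m + 1 - INR p < e / 6 * INR m + 1) by (unfold eta in K5; lra).
    assert (Q2 : e * (INR m - 2 * eta * INR m) = e * INR m - e * (e * INR m) / 6) by (unfold eta; field).
    lra. }
  rewrite S_INR. fold m.
  replace ((INR m + 1) / INR p - 1) with ((INR m + 1 - INR p) / INR p) by (field; lra).
  rewrite Rabs_pos_eq.
  - apply Rmult_lt_reg_r with (INR p); auto. unfold Rdiv. rewrite Rmult_assoc, Rinv_l by lra.
    assert (e * INR p <= eps * INR p) by (apply Rmult_le_compat_r; lra). lra.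
  - unfold Rdiv. apply Rmult_le_pos. assert (INR p <= INR m) by (apply le_INR; auto). lra. left; apply Rinv_0_lt_compat; auto.
Qed.
End B.
End X.

Theorem lemma3 (x d1 : R) (hx0 : 0 <= x) (hx1 : x < 1)
  (hd1 : is_lim_seq (fun n => digit_avg x (S n)) d1) :
  (d1 < 1 ->
     filterlim (takagi_quot x) (at_right 0) (locally ((1 - d1) - d1))) /\
  (d1 = 1 ->
     forall b : nat -> nat,
       (forall n, (b n < b (S n))%nat) ->
       (forall k : nat, (1 <= k)%nat ->
          (bdigit k x = 0%nat <-> exists n, b n = k)) ->
       (forall n, (1 <= b n)%nat) ->
       ((exists l : R, filterlim (takagi_quot x) (at_right 0) (locally l)) <->
          is_lim_seq (fun n => INR (b (S n)) / INR (b n)) 1) /\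
       (forall l : R, filterlim (takagi_quot x) (at_right 0) (locally l) ->
          l = -1)).
Proof.
  pose proof (Sd_conv x d1 hd1) as HS.
  pose proof (sl_conv x d1 HS) as HD.
  split.
  - intros Hd. apply (GL x hx0 hx1). exact HD. exact (Tconv_d1 x d1 Hd HS).
  - intros Hd b Hb Hbd Hb1.
    assert (E : 1 - d1 - d1 = -1) by (rewrite Hd; ring).
    rewrite E in HD.
    assert (Hl : forall l : R, filterlim (takagi_quot x) (at_right 0) (locally l) -> l = -1).
    { intros l Hf. exact (C_lemma x hx0 hx1 b Hb Hbd Hb1 (-1) l HD Hf). }
    split; [split|exact Hl].
    + intros [l Hf]. pose proof (Hl l Hf). subst l.
      pose proof (D_lemma x hx0 hx1 b Hb Hbd Hb1 Hf) as HR.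
      apply is_lim_seq_spec. intros eps. destruct (HR eps (cond_pos eps)) as [N HN].
      exists N. exact HN.
    + intros Hr. exists (-1). apply (GL x hx0 hx1). exact HD.
      apply (Tconv_b x b Hb Hbd Hb1).
      apply is_lim_seq_spec in Hr. intros eps He.
      destruct (Hr (mkposreal eps He)) as [N HN]. exists N. exact HN.
Qed.
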